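(* Let $K=\mathbb{Q}(\zeta)$ be a cubic field, where $\zeta$ is a root of $\mathcal{C}(x,1)$ and $\mathcal{C}=(a,b,c,d)$ is the canonical binary cubic form of $K$. Let $\rho=a\zeta$ and $\omega=a\zeta^2+b\zeta$, so that $\mathcal{O}_K=\mathbb{Z}+\mathbb{Z}\rho+\mathbb{Z}\omega$. For $\alpha=u+x\rho+y\omega$ with $u,x,y\in\mathbb{Q}$ define \[ N(\alpha)=\begin{pmatrix} u & -ad\,y & -ad\,x-bd\,y\\ x & u-bx-cy & -cx-dy\\ y & ax & u-cy\end{pmatrix}. \] Let $M_{\mathbb{Z}}$ (resp. $M_{\mathbb{Q}}$) be the set of all matrices of this form with $u,x,y\in\mathbb{Z}$ (resp. $u,x,y\in\mathbb{Q}$). Then $\phi:\mathcal{O}_K\to M_{\mathbb{Z}}$, $\alpha\mapsto N(\alpha)$, is a ring isomorphism and $\psi:K\to M_{\mathbb{Q}}$, $\alpha\mapsto N(\alpha)$, is a field isomorphism (with the usual matrix addition and multiplication). Moreover, for every $\alpha\in K$, the trace of $\alpha$ equals the trace of $N(\alpha)$ and the norm of $\alpha$ equals $\det N(\alpha)$.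
   Context: A binary cubic form is $\mathcal{C}(x,y)=ax^3+bx^2y+cxy^2+dy^3$ with $a,b,c,d\in\mathbb{Z}$, irreducible over $\mathbb{Q}$, abbreviated $(a,b,c,d)$; its discriminant is $b^2c^2+18abcd-4ac^3-4b^3d-27a^2d^2$. The Davenport–Heilbronn map sends (the conjugacy class of) a cubic field $L$ with integral basis $\{1,\omega_2,\omega_3\}$ to the $\mathrm{GL}_2(\mathbb{Z})$-class of the form $\frac{1}{\mathrm{disc}(L)}N\big((\omega_2-\omega_2')x-(\omega_3-\omega_3')y\big)$, giving a bijection between cubic fields (up to conjugacy) and certain $\mathrm{GL}_2(\mathbb{Z})$-classes of binary cubic forms of the same discriminant. The canonical binary cubic form of a cubic field $K$ is a binary cubic form $\mathcal{C}$ in the image of the Davenport–Heilbronn map corresponding to $K$, with discriminant equal to that of $K$ and with $K=\mathbb{Q}(\zeta)$, $\mathcal{C}(\zeta,1)=0$; for such $\mathcal{C}$, $\{1,a\zeta,a\zeta^2+b\zeta\}$ is an integral basis of $\mathcal{O}_K$ (Belabas). *)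

(* Defs.v *)
From HB Require Import structures.
From mathcomp Require Import all_boot all_order all_algebra all_field.
Set Implicit Arguments. Unset Strict Implicit. Unset Printing Implicit Defensive.
Import Order.TTheory GRing.Theory Num.Theory.
Local Open Scope ring_scope.

Definition cubic_poly (a b c d : int) : {poly rat} :=
  a%:~R%:P * 'X^3 + b%:~R%:P * 'X^2 + c%:~R%:P * 'X + d%:~R%:P.

(* The binary cubic form (a,b,c,d) is irreducible over Q:
   a <> 0 (otherwise y divides the form) and C(x,1) is irreducible. *)
Definition cubic_form_irreducible (a b c d : int) : Prop :=
  a != 0 /\ irreducible_poly (cubic_poly a b c d).

Definition is_integral (L : fieldExtType rat) (z : L) : Prop :=
  exists p : {poly int}, p \is monic /\ root (map_poly (fun n : int => n%:~R) p) z.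

Definition mult_mx (L : fieldExtType rat) (z : L) : 'M[rat]_(\dim {:L}) :=
  passmx.mxof (vbasis fullv) (vbasis fullv) (amulr z).
Definition field_trace (L : fieldExtType rat) (z : L) : rat := \tr (mult_mx z).
Definition field_norm (L : fieldExtType rat) (z : L) : rat := \det (mult_mx z).

Definition Nmat (a b c d : int) (u x y : rat) : 'M[rat]_3 :=
  let A : rat := a%:~R in let B : rat := b%:~R in
  let Cc : rat := c%:~R in let D : rat := d%:~R in
  \matrix_(i < 3, j < 3) nth 0 (nth [::]
    [:: [:: u ; - (A * D) * y ; - (A * D) * x - (B * D) * y ];
        [:: x ; u - B * x - Cc * y ; - Cc * x - D * y ];
        [:: y ; A * x ; u - Cc * y ] ] i) j.

Definition MQ (a b c d : int) : 'M[rat]_3 -> Prop :=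
  fun M => exists u x y : rat, M = Nmat a b c d u x y.
Definition MZ (a b c d : int) : 'M[rat]_3 -> Prop :=
  fun M => exists u x y : int, M = Nmat a b c d u%:~R x%:~R y%:~R.

(* Main.v *)
Require Import Defs.
From HB Require Import structures.
From mathcomp Require Import all_boot all_order all_algebra all_field.
From mathcomp Require Import ring.
Import Order.TTheory GRing.Theory Num.Theory.
Local Open Scope ring_scope.
Lemma rootE (L : fieldExtType rat) (a b c d : int) (zeta : L) :
  root (map_poly (in_alg L) (cubic_poly a b c d)) zeta ->
  in_alg L a%:~R * zeta ^+ 3 + in_alg L b%:~R * zeta ^+ 2 + in_alg L c%:~R * zeta + in_alg L d%:~R = 0.
Proof.
rewrite /root /cubic_poly !(rmorphD, rmorphM) /= !map_polyC /= !map_polyX !hornerE => /eqP H; apply: (etrans _ H); ring.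

Qed.

Lemma spanF (L : fieldExtType rat) (zeta : L) :
  \dim {:L} = 3%N -> <<1%VS; zeta>>%VS = fullv ->
  forall v : L, exists r0 r1 r2 : rat, v = r0%:A + r1 *: zeta + r2 *: zeta ^+ 2.
Proof.
move=> Hd Hgen v.
have hv : v \in <<1%VS; zeta>>%VS by rewrite Hgen memvf.
have hdeg : adjoin_degree 1%VS zeta = 3%N.
  by have := dim_Fadjoin 1%AS zeta; rewrite Hgen Hd dimv1 muln1.
have := Fadjoin_poly_eq hv.
have := size_Fadjoin_poly 1%VS zeta v; rewrite hdeg => hs.
have /polyOverP hc := Fadjoin_polyOver 1%VS zeta v.
rewrite (horner_coef_wide _ hs) !big_ord_recr big_ord0 /= => <-.
have [r0 ->] := vlineP _ _ (hc 0%N).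
have [r1 ->] := vlineP _ _ (hc 1%N).
have [r2 ->] := vlineP _ _ (hc 2%N).
exists r0, r1, r2.
by rewrite add0r expr0 expr1 !mulr1 -!scalerAl !mul1r.
Qed.
Lemma eltM (L : comNzRingType) (F : {rmorphism rat -> L}) (A B C D : rat) (rho omega : L)
 (h1 : rho*rho = F A * omega - F B * rho)
 (h2 : rho*omega = - F C * rho - F (A*D))
 (h3 : omega*omega = - F C * omega - F D * rho - F (B*D)) u x y u' x' y' :
 (F u + F x * rho + F y * omega) * (F u' + F x' * rho + F y' * omega) =
 F (u*u' - A*D*y*x' - (A*D*x + B*D*y)*y')
  + F (x*u' + (u - B*x - C*y)*x' + (-C*x - D*y)*y') * rho
  + F (y*u' + A*x*x' + (u - C*y)*y') * omega.
Proof.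
move: h1 h2 h3; rewrite !(rmorphD, rmorphM, rmorphN, rmorphB) /= => h1 h2 h3.
apply/eqP; rewrite -subr_eq0; apply/eqP.
transitivity (F x * F x' * (rho * rho - (F A * omega - F B * rho))
  + (F x * F y' + F y * F x') * (rho * omega - (- F C * rho - F A * F D))
  + F y * F y' * (omega * omega - (- F C * omega - F D * rho - F B * F D))).
  ring.
by rewrite h1 h2 h3 !subrr !mulr0 !addr0.
Qed.
Lemma coord3 (K : fieldType) (vT : vectType K) (e0 e1 e2 : vT)
  (fr : free [:: e0; e1; e2]) (u x y : K) (j : 'I_3) :
  coord [tuple e0; e1; e2] j (u *: e0 + x *: e1 + y *: e2) = nth 0 [:: u; x; y] j.
Proof.
have := @coord_sum_free _ _ 3 [tuple e0; e1; e2] (fun i : 'I_3 => nth 0 [:: u; x; y] i) j fr.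
by rewrite !big_ord_recr big_ord0 /= add0r.
Qed.

Lemma span3 (K : fieldType) (vT : vectType K) (e0 e1 e2 : vT) v :
  v \in <<[:: e0; e1; e2]>>%VS ->
  v = coord [tuple e0; e1; e2] (@Ordinal 3 0 isT) v *: e0
    + coord [tuple e0; e1; e2] (@Ordinal 3 1 isT) v *: e1
    + coord [tuple e0; e1; e2] (@Ordinal 3 2 isT) v *: e2.
Proof.
move=> hv; rewrite {1}(@coord_span _ _ 3 [tuple e0; e1; e2] v hv).
rewrite !big_ord_recr big_ord0 /= add0r.
by congr (_ + _ + _); congr (coord _ _ _ *: _); apply: val_inj.
Qed.

Lemma NmatM (a b c d : int) (u x y u' x' y' : rat) :
  let A : rat := a%:~R in let B : rat := b%:~R in
  let C : rat := c%:~R in let D : rat := d%:~R in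
  Nmat a b c d (u*u' - A*D*y*x' - (A*D*x + B*D*y)*y')
   (x*u' + (u - B*x - C*y)*x' + (-C*x - D*y)*y')
   (y*u' + A*x*x' + (u - C*y)*y') = Nmat a b c d u x y *m Nmat a b c d u' x' y'.
Proof.
move=> A B C D.
apply/matrixP => i j; rewrite !mxE !big_ord_recr big_ord0 /= !mxE /=.
case: i => [[|[|[|//]]] ?]; case: j => [[|[|[|//]]] ?] /=; rewrite /A /B /C /D; ring.
Qed.

Lemma NmatD (a b c d : int) (u x y u' x' y' : rat) :
  Nmat a b c d (u + u') (x + x') (y + y') = Nmat a b c d u x y + Nmat a b c d u' x' y'.
Proof.
apply/matrixP => i j; rewrite !mxE /=.
case: i => [[|[|[|//]]] ?]; case: j => [[|[|[|//]]] ?] /=; ring.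
Qed.

Lemma Nmat1 (a b c d : int) : Nmat a b c d 1 0 0 = 1.
Proof.
apply/matrixP => i j; rewrite !mxE /=.
case: i => [[|[|[|//]]] ?]; case: j => [[|[|[|//]]] ?] /=; ring.
Qed.

Lemma castlink n (Hn : n = 3%N) (M : 'M[rat]_n) (N : 'M_3) :
  (forall i j, M i j = N (cast_ord Hn i) (cast_ord Hn j)) -> \tr M = \tr N /\ \det M = \det N.
Proof.
subst n => H; have -> : M = N by apply/matrixP => i j; rewrite H !cast_ord_id.
by [].
Qed.

Lemma coordcast (L : fieldExtType rat) n (Hn : n = 3%N) (Y : n.-tuple L) (X : 3.-tuple L) :
  tval Y = tval X -> forall j v, coord Y j v = coord X (cast_ord Hn j) v.
Proof.
subst n => hv j v; have -> : Y = X by apply: val_inj.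
by rewrite cast_ord_id.
Qed.
Lemma sim (L : fieldExtType rat) (e g : (\dim {:L}).-tuple L)
  (be : basis_of fullv e) (bg : basis_of fullv g) (h : 'End(L)) :
  \tr (passmx.mxof e e h) = \tr (passmx.mxof g g h) /\
  \det (passmx.mxof e e h) = \det (passmx.mxof g g h).
Proof.
have E : passmx.mxof e e h = passmx.mxof e g \1 *m passmx.mxof g g h *m passmx.mxof g e \1.
  rewrite -(passmx.mxof_comp _ _ bg) -(passmx.mxof_comp _ _ bg).
  by rewrite comp_lfun1r comp_lfun1l.
have QP : passmx.mxof g e \1 *m passmx.mxof e g \1 = 1%:M.
  by rewrite -(passmx.mxof_comp _ _ be) comp_lfun1l passmx.mxof1 // (basis_free bg).
rewrite E; split.
  by rewrite mxtrace_mulC mulmxA QP mul1mx.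
by rewrite [LHS]det_mulmx [X in X * _]det_mulmx mulrC mulrA -det_mulmx QP det1 mul1r.
Qed.

Lemma scal2F (L : fieldExtType rat) (u x y : rat) (r o : L) :
  u%:A + x *: r + y *: o = in_alg L u + in_alg L x * r + in_alg L y * o.
Proof. by rewrite !in_algE !mulr_algl. Qed.

Theorem proposition2p2 (L : fieldExtType rat) (a b c d : int) (zeta : L) :
  \dim {:L} = 3%N ->
  cubic_form_irreducible a b c d ->
  root (map_poly (in_alg L) (cubic_poly a b c d)) zeta ->
  <<1%VS; zeta>>%VS = fullv ->
  let rho := a%:~R * zeta in
  let omega := a%:~R * zeta ^+ 2 + b%:~R * zeta in
  (forall z : L, is_integral z <->
     exists u x y : int, z = u%:~R + x%:~R * rho + y%:~R * omega) ->
  exists psi : L -> 'M[rat]_3,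
    [/\ forall u x y : rat,
          psi (u%:A + x *: rho + y *: omega) = Nmat a b c d u x y,
        (* psi : K -> M_Q is a field isomorphism *)
        [/\ psi 1 = 1,
            forall z w, psi (z + w) = psi z + psi w,
            forall z w, psi (z * w) = psi z * psi w,
            injective psi &
            forall M, MQ a b c d M <-> exists z, psi z = M],
        (* phi = psi restricted to O_K is a ring isomorphism O_K -> M_Z *)
        [/\ forall z, is_integral z -> MZ a b c d (psi z) &
            forall M, MZ a b c d M -> exists2 z, is_integral z & psi z = M],
        (forall z, field_trace z = \tr (psi z)) &
        (forall z, field_norm z = \det (psi z))].
Proof.
move=> Hd [Ha _] Hroot Hgen rho omega Hint.
have hE := @rootE _ _ _ _ _ _ Hroot.
set A : rat := a%:~R in hE; set B : rat := b%:~R in hE.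
set C : rat := c%:~R in hE; set D : rat := d%:~R in hE.
have eI : forall n : int, (n%:~R : L) = in_alg L n%:~R by move=> n; rewrite rmorph_int.
have rhoE : rho = in_alg L A * zeta by rewrite /rho eI.
have omegaE : omega = in_alg L A * zeta ^+ 2 + in_alg L B * zeta by rewrite /omega !eI.
have h1 : rho * rho = in_alg L A * omega - in_alg L B * rho by rewrite rhoE omegaE; ring.
have h2 : rho * omega = - in_alg L C * rho - in_alg L (A * D).
  apply/eqP; rewrite -subr_eq0; apply/eqP; rewrite rhoE omegaE rmorphM.
  transitivity (in_alg L A * (in_alg L A * zeta ^+ 3 + in_alg L B * zeta ^+ 2 + in_alg L C * zeta + in_alg L D)); first ring.
  by rewrite hE mulr0.
have h3 : omega * omega = - in_alg L C * omega - in_alg L D * rho - in_alg L (B * D).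
  apply/eqP; rewrite -subr_eq0; apply/eqP; rewrite rhoE omegaE rmorphM.
  transitivity ((in_alg L A * zeta + in_alg L B) * (in_alg L A * zeta ^+ 3 + in_alg L B * zeta ^+ 2 + in_alg L C * zeta + in_alg L D)); first ring.
  by rewrite hE mulr0.
have FA0 : in_alg L A != 0 by rewrite fmorph_eq0 intr_eq0.
have hsp : forall v : L, exists u x y : rat, v = u%:A + x *: rho + y *: omega.
  move=> v; have [r0 [r1 [r2 ->]]] := @spanF _ _ Hd Hgen v.
  exists r0, ((r1 - B * (r2 / A)) / A), (r2 / A).
  rewrite !scal2F rhoE omegaE !(rmorphM, rmorphB, fmorphV) /=.
  by field.

pose X : 3.-tuple L := [tuple 1; rho; omega].
have Hspan : <<X>>%VS = fullv.
  apply/eqP; rewrite eqEsubv subvf /=; apply/subvP => v _.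
  have [u [x [y ->]]] := hsp v.
  by rewrite !rpredD ?rpredZ // memv_span // !inE eqxx ?orbT.
have Hfree : free X by rewrite /free Hspan Hd.
have Hfree' : free [:: 1; rho; omega] by [].
pose i0 := @Ordinal 3 0 isT. pose i1 := @Ordinal 3 1 isT. pose i2 := @Ordinal 3 2 isT.
have dec : forall z, z = coord X i0 z *: 1 + coord X i1 z *: rho + coord X i2 z *: omega.
  by move=> z; apply: span3; rewrite -[<<_>>%VS]/(<<X>>%VS) Hspan memvf.
have cE : forall u x y, [/\ coord X i0 (u%:A + x *: rho + y *: omega) = u,
   coord X i1 (u%:A + x *: rho + y *: omega) = x &
   coord X i2 (u%:A + x *: rho + y *: omega) = y].
  by move=> u x y; split; rewrite /X coord3.
have mulE : forall u x y u' x' y',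
  (u%:A + x *: rho + y *: omega) * (u'%:A + x' *: rho + y' *: omega) =
 (u*u' - A*D*y*x' - (A*D*x + B*D*y)*y')%:A
  + (x*u' + (u - B*x - C*y)*x' + (-C*x - D*y)*y') *: rho
  + (y*u' + A*x*x' + (u - C*y)*y') *: omega.
  move=> u x y u' x' y'; rewrite !scal2F.
  exact: (@eltM _ (in_alg L) A B C D rho omega h1 h2 h3).
pose psi z := Nmat a b c d (coord X i0 z) (coord X i1 z) (coord X i2 z).
have psiE : forall u x y, psi (u%:A + x *: rho + y *: omega) = Nmat a b c d u x y.
  by move=> u x y; rewrite /psi; have [-> -> ->] := cE u x y.

have colE : forall z (k l : 'I_3), coord X l (X`_k * z) = psi z l k.
  move=> z k l.
  have ek : X`_k = (nth 0 [:: 1; 0; 0] k)%:A + (nth 0 [:: 0; 1; 0] k) *: rho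
                   + (nth 0 [:: 0; 0; 1] k) *: omega.
    by case: k => [[|[|[|//]]] ?]; rewrite /= !scale0r !scale1r ?addr0 ?add0r.
  rewrite ek {1}(dec z) mulE /psi /X coord3 //.
  case: k {ek} => [[|[|[|//]]] ?]; case: l => [[|[|[|//]]] ?]; rewrite !mxE /=; ring.
have trdet : forall z, field_trace z = \tr (psi z) /\ field_norm z = \det (psi z).
  move=> z; rewrite /field_trace /field_norm /mult_mx.
  pose Bn : (\dim {:L}).-tuple L := tcast (esym Hd) X.
  have bBn : basis_of fullv Bn by rewrite /basis_of val_tcast Hspan eqxx Hfree.
  have [-> ->] := @sim _ _ _ (vbasisP fullv) bBn (amulr z).
  rewrite -mxtrace_tr -det_tr.
  apply: (@castlink _ Hd) => i j.
  rewrite mxE /= /passmx.mxof mxE /= passmx.vecof_delta /passmx.rVof mxE lfunE /=.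
  rewrite (@coordcast _ _ Hd Bn X (val_tcast _ _)).
  have -> : Bn`_j = X`_(cast_ord Hd j) by rewrite /Bn val_tcast.
  by rewrite colE.
exists psi; split.
- exact: psiE.
- split.
  + have -> : psi 1 = psi (1%:A + 0 *: rho + 0 *: omega) by rewrite !scale0r !addr0 scale1r.
    by rewrite psiE Nmat1.
  + by move=> z w; rewrite /psi !linearD /=; exact: NmatD.
  + move=> z w; rewrite {1}(dec z) {1}(dec w) mulE psiE; exact: NmatM.
  + move=> z w H; rewrite (dec z) (dec w).
    have e0 := congr1 (fun M : 'M_3 => M i0 i0) H.
    have e1 := congr1 (fun M : 'M_3 => M i1 i0) H.
    have e2 := congr1 (fun M : 'M_3 => M i2 i0) H.
    move: e0 e1 e2; rewrite /psi !mxE /= => -> -> ->; done.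
  + move=> M; split => [[u [x [y ->]]] | [z <-]].
      by exists (u%:A + x *: rho + y *: omega); rewrite psiE.
    by exists (coord X i0 z), (coord X i1 z), (coord X i2 z).
- have conv : forall u x y : int, (u%:~R : L) + x%:~R * rho + y%:~R * omega
     = (u%:~R : rat)%:A + (x%:~R : rat) *: rho + (y%:~R : rat) *: omega.
    by move=> u x y; rewrite scal2F !eI.
  split.
  + move=> z /Hint [u [x [y ->]]]; exists u, x, y; by rewrite conv psiE.
  + move=> M [u [x [y ->]]]; exists ((u%:~R : rat)%:A + (x%:~R : rat) *: rho + (y%:~R : rat) *: omega).
      by apply/Hint; exists u, x, y; rewrite conv.
    by rewrite psiE.
- by move=> z; case: (trdet z).
- by move=> z; case: (trdet z).
Qed.
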